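(* Let $(D,S,B)$ be a datum. Then the space $\mathrm{Spc}(D,S)$, together with the map $\mathrm{Supp}\colon \mathrm{Ob}(D)\to 2^{\mathrm{Spc}(D,S)}$, $a\mapsto \{P\in \mathrm{Spc}(D,S)\mid a\notin P\}$, is the universal support datum of $(D,S)$: for every support datum $(Y,\mathrm{Supp}_Y)$ of $(D,S)$ there exists a unique map of support data $\mathrm{Spc}(D,S)\to Y$.
   Context: $\mathrm{Cat}_\infty^{\mathrm{perf}}$ denotes the $\infty$-category of small idempotent-complete stable $\infty$-categories (with its standard symmetric monoidal structure). A datum $(D,S,B)$ consists of algebra objects $B,S$ of $\mathrm{Cat}_\infty^{\mathrm{perf}}$, a homomorphism $B\to S$, and a left $S$-module $D$ in $\mathrm{Cat}_\infty^{\mathrm{perf}}$; the action is written $s\otimes a$. An $S$-submodule of $D$ is a thick subcategory $I\subset D$ with $s\otimes a\in I$ for all $s\in S$, $a\in I$. An $S$-submodule $P$ is prime if for every family $\{I_i\}$ of $S$-submodules each strictly containing $P$, the intersection $\bigcap_i I_i$ strictly contains $P$. $\mathrm{Spc}(D,S)$ is the set of prime $S$-submodules, with the coarsest topology in which every set $\mathrm{Supp}(a)=\{P\mid a\notin P\}$ ($a\in D$) is closed. A support datum of $(D,S)$ is a $T_0$ topological space $X$ with a map $\mathrm{Supp}\colon\mathrm{Ob}(D)\to 2^X$ such that: (1) $\mathrm{Supp}(a)=\mathrm{Supp}(a[1])$; (2) $\mathrm{Supp}(s\otimes a)\subset\mathrm{Supp}(a)$ for $s\in S,a\in D$; (3)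 $\mathrm{Supp}(a\oplus b)=\mathrm{Supp}(a)\cup\mathrm{Supp}(b)$; (4) $\mathrm{Supp}(b)\subset\mathrm{Supp}(a)\cup\mathrm{Supp}(c)$ for every exact triangle $a\to b\to c$; (5) for distinct $S$-submodules $I\neq J$ of $D$, $\bigcup_{a\in I}\mathrm{Supp}(a)\neq\bigcup_{b\in J}\mathrm{Supp}(b)$; (6) the topology of $X$ is the coarsest one in which all $\mathrm{Supp}(a)$, $a\in D$, are closed. A map of support data $X\to Y$ is a continuous map $f$ with $f^{-1}(\mathrm{Supp}_Y(a))=\mathrm{Supp}_X(a)$ for all $a\in D$. *)

(* Defs.v *)
(** The object-level data of a datum (D,S,B).  [Ob] is the set of isomorphism
    classes of objects of the idempotent-complete stable oo-category D, with its
    triangulated structure on objects: zero object, suspension [shift] (a bijection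
    on iso classes with inverse [unshift]), direct sum, and the relation
    [tri a b c] := "there is an exact (cofiber) triangle a -> b -> c -> a[1]".
    [SOb]/[BOb] are the objects of the algebras S and B, [hom] the object part of
    B -> S, and [act s a] = s (x) a. The recorded axioms hold in every stable
    oo-category (rotation axiom TR2, TR1, split triangles). *)
Record Datum := {
  Ob : Type;
  SOb : Type;
  BOb : Type;
  hom : BOb -> SOb;
  zero : Ob;
  shift : Ob -> Ob;
  unshift : Ob -> Ob;
  oplus : Ob -> Ob -> Ob;
  act : SOb -> Ob -> Ob;
  tri : Ob -> Ob -> Ob -> Prop;
  shiftK : forall a, unshift (shift a) = a;
  unshiftK : forall a, shift (unshift a) = a;
  tri_id : forall a, tri a a zero;
  tri_split : forall a b, tri a (oplus a b) b;
  tri_rot : forall a b c, tri a b c -> tri b c (shift a);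
  tri_rotinv : forall a b c, tri a b c -> tri (unshift c) a b
}.

Section Defs.
Variable D : Datum.

Definition thick (I : Ob D -> Prop) : Prop :=
  I (zero D) /\
  (forall a, I a -> I (shift D a)) /\
  (forall a, I a -> I (unshift D a)) /\
  (forall a b c, tri D a b c ->
     (I a -> I b -> I c) /\ (I b -> I c -> I a) /\ (I a -> I c -> I b)) /\
  (forall a b, I (oplus D a b) -> I a /\ I b).

Definition submodule (I : Ob D -> Prop) : Prop :=
  thick I /\ (forall (s : SOb D) a, I a -> I (act D s a)).

Definition strictly_contains (J P : Ob D -> Prop) : Prop :=
  (forall a, P a -> J a) /\ exists a, J a /\ ~ P a.

Definition prime (P : Ob D -> Prop) : Prop :=
  submodule P /\
  forall Fam : (Ob D -> Prop) -> Prop,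
    (forall I, Fam I -> submodule I /\ strictly_contains I P) ->
    strictly_contains (fun a => forall I, Fam I -> I a) P.

Definition Spc : Type := { P : Ob D -> Prop | prime P }.

Definition SuppSpc (a : Ob D) (P : Spc) : Prop := ~ proj1_sig P a.

End Defs.

Definition is_topology {X : Type} (O : (X -> Prop) -> Prop) : Prop :=
  O (fun _ => True) /\
  (forall F : (X -> Prop) -> Prop, (forall U, F U -> O U) ->
      O (fun x => exists U, F U /\ U x)) /\
  (forall U V, O U -> O V -> O (fun x => U x /\ V x)).

(** open sets of the coarsest topology in which all [C a] are closed *)
Definition coarsest_closing {X A : Type} (C : A -> X -> Prop) (U : X -> Prop) : Prop :=
  forall O : (X -> Prop) -> Prop, is_topology O ->
    (forall a, O (fun x => ~ C a x)) -> O U.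

Definition T0 {X : Type} (O : (X -> Prop) -> Prop) : Prop :=
  forall x y : X, x <> y -> exists U, O U /\ ~ (U x <-> U y).

Definition continuous {X Y : Type} (OX : (X -> Prop) -> Prop)
  (OY : (Y -> Prop) -> Prop) (f : X -> Y) : Prop :=
  forall U, OY U -> OX (fun x => U (f x)).

Definition OSpc (D : Datum) : (Spc D -> Prop) -> Prop :=
  coarsest_closing (@SuppSpc D).

(** support datum (Y, OY, sigma) of (D,S); sigma a = Supp_Y(a) as a subset of Y *)
Record support_datum (D : Datum) {Y : Type} (OY : (Y -> Prop) -> Prop)
    (sigma : Ob D -> Y -> Prop) : Prop := {
  sd_top : is_topology OY;
  sd_T0 : T0 OY;
  sd1 : forall a y, sigma a y <-> sigma (shift D a) y;
  sd2 : forall s a y, sigma (act D s a) y -> sigma a y;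
  sd3 : forall a b y, sigma (oplus D a b) y <-> (sigma a y \/ sigma b y);
  sd4 : forall a b c, tri D a b c -> forall y, sigma b y -> sigma a y \/ sigma c y;
  sd5 : forall I J, submodule D I -> submodule D J -> ~ (forall a, I a <-> J a) ->
          ~ (forall y, (exists a, I a /\ sigma a y) <-> (exists b, J b /\ sigma b y));
  sd6 : forall U, OY U <-> coarsest_closing sigma U
}.

Definition support_map {D : Datum} {X Y : Type} (OX : (X -> Prop) -> Prop)
  (sX : Ob D -> X -> Prop) (OY : (Y -> Prop) -> Prop) (sY : Ob D -> Y -> Prop)
  (f : X -> Y) : Prop :=
  continuous OX OY f /\ forall a x, sY a (f x) <-> sX a x.

(* Main.v *)
Require Import Defs.
From mathcomp Require classical_sets.
From Stdlib Require Import Classical FunctionalExtensionality PropExtensionality ProofIrrelevance IndefiniteDescription.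

Lemma zorn_sets (T : Type) (P : (T -> Prop) -> Prop) :
  (forall F : (T -> Prop) -> Prop, (forall X, F X -> P X) ->
     (forall X Y, F X -> F Y -> (forall x, X x -> Y x) \/ (forall x, Y x -> X x)) ->
     P (fun x => exists2 X, F X & X x)) ->
  exists A, P A /\ forall B, (forall x, A x -> B x) -> ~ (forall x, B x -> A x) -> ~ P B.
Proof.
intros H. destruct (@classical_sets.Zorn_bigcup T P) as [A [PA HA]].
- intros F FP Ftot. apply (H F FP Ftot).
- exists A. split; [exact PA|]. intros B h1 h2. apply HA. split; assumption.
Qed.

Lemma top_coarsest {X A : Type} (C : A -> X -> Prop) : is_topology (coarsest_closing C).
Proof.
split; [|split].
- intros O HO _. apply HO.
- intros F HF O HO Hb. apply HO. intros U FU. apply (HF U FU O HO Hb).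
- intros U V HU HV O HO Hb. apply HO; [apply HU|apply HV]; assumption.
Qed.

Lemma coarsest_ext {X A : Type} (C : A -> X -> Prop) (U V : X -> Prop) :
  coarsest_closing C U -> (forall x, U x <-> V x) -> coarsest_closing C V.
Proof.
intros HU HE. assert (U = V) as <-; [|exact HU].
apply functional_extensionality; intro x; apply propositional_extensionality; apply HE.
Qed.

Section S.
Variable D : Datum.

Lemma submodule_inter (Fam : (Ob D -> Prop) -> Prop) :
  (forall I, Fam I -> submodule D I) -> submodule D (fun x => forall I, Fam I -> I x).
Proof.
intros HF. split; [split; [|split; [|split; [|split]]]|].
- intros I FI. destruct (HF I FI) as [[h _] _]. exact h.
- intros a Ha I FI. destruct (HF I FI) as [[_ [h _]] _]. apply h, Ha, FI.
- intros a Ha I FI. destruct (HF I FI) as [[_ [_ [h _]]] _]. apply h, Ha, FI.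
- intros a b c T. split; [|split]; intros H1 H2 I FI;
  destruct (HF I FI) as [[_ [_ [_ [h _]]]] _]; destruct (h a b c T) as [g1 [g2 g3]];
  first [apply g1|apply g2|apply g3]; first [exact (H1 I FI)|exact (H2 I FI)].
- intros a b Hab. split; intros I FI; destruct (HF I FI) as [[_ [_ [_ [_ h]]]] _];
  destruct (h a b (Hab I FI)); assumption.
- intros s a Ha I FI. destruct (HF I FI) as [_ h]. apply h, Ha, FI.
Qed.

Definition good (I : Ob D -> Prop) (a : Ob D) (X : Ob D -> Prop) :=
  submodule D X /\ (forall x, I x -> X x) /\ ~ X a.

Lemma separate (I : Ob D -> Prop) (a : Ob D) :
  submodule D I -> ~ I a -> exists P : Spc D, (forall x, I x -> proj1_sig P x) /\ ~ proj1_sig P a.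
Proof.
intros HI nIa.
destruct (zorn_sets _ (fun X => good I a X \/ forall x, ~ X x)) as [A [PA HA]].
- intros F FP Ftot.
  destruct (classic (exists x, exists2 X, F X & X x)) as [[x0 [X0 F0 X0x]]|Hn].
  2:{ right. intros x Hx. apply Hn. exists x. exact Hx. }
  left.
  assert (Hg : forall X x, F X -> X x -> good I a X).
  { intros X x FX Xx. destruct (FP X FX) as [g|e]; [exact g|destruct (e x Xx)]. }
  assert (H2 : forall X Y u v, F X -> F Y -> X u -> Y v ->
             exists Z, F Z /\ good I a Z /\ Z u /\ Z v).
  { intros X Y u v FX FY Xu Yv. destruct (Ftot X Y FX FY) as [s|s].
    - exists Y. split; [exact FY|split; [exact (Hg Y v FY Yv)|split; [exact (s u Xu)|exact Yv]]].
    - exists X. split; [exact FX|split; [exact (Hg X u FX Xu)|split; [exact Xu|exact (s v Yv)]]]. }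
  assert (g0 := Hg X0 x0 F0 X0x).
  split; [split; [split; [|split; [|split; [|split]]]|]|split].
  + exists X0; [exact F0|]. destruct g0 as [[[h _] _] _]; exact h.
  + intros u [X FX Xu]. exists X; [exact FX|].
    destruct (Hg X u FX Xu) as [[[_ [h _]] _] _]. apply h, Xu.
  + intros u [X FX Xu]. exists X; [exact FX|].
    destruct (Hg X u FX Xu) as [[[_ [_ [h _]]] _] _]. apply h, Xu.
  + intros u v w T. split; [|split]; intros [X FX Xu] [Y FY Yv];
    [destruct (H2 X Y u v FX FY Xu Yv) as [Z [FZ [[[[_ [_ [_ [h _]]]] _] _] [Zu Zv]]]]
    |destruct (H2 X Y v w FX FY Xu Yv) as [Z [FZ [[[[_ [_ [_ [h _]]]] _] _] [Zu Zv]]]]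
    |destruct (H2 X Y u w FX FY Xu Yv) as [Z [FZ [[[[_ [_ [_ [h _]]]] _] _] [Zu Zv]]]]];
    exists Z; try exact FZ; destruct (h u v w T) as [k1 [k2 k3]]; auto.
  + intros u v [X FX Xu].
    destruct (Hg X _ FX Xu) as [[[_ [_ [_ [_ h]]]] _] _].
    destruct (h u v Xu). split; exists X; assumption.
  + intros s u [X FX Xu]. exists X; [exact FX|].
    destruct (Hg X u FX Xu) as [[_ h] _]. apply h, Xu.
  + intros x Ix. exists X0; [exact F0|]. destruct g0 as [_ [h _]]. apply h, Ix.
  + intros [X FX Xa]. destruct (Hg X a FX Xa) as [_ [_ h]]. apply h, Xa.
- assert (gA : good I a A).
  { destruct PA as [g|e]; [exact g|].
    exfalso. apply (HA I).
    + intros x Ax. destruct (e x Ax).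
    + intros h. destruct HI as [[z _] _]. apply (e _ (h _ z)).
    + left. split; [exact HI|split; [auto|exact nIa]]. }
  destruct gA as [sA [IA nAa]].
  assert (pA : prime D A).
  { split; [exact sA|]. intros Fam HF. split.
    - intros x Ax J FJ. destruct (HF J FJ) as [_ [h _]]. apply h, Ax.
    - exists a. split; [|exact nAa]. intros J FJ. apply NNPP. intros nJa.
      destruct (HF J FJ) as [sJ [AJ [b [Jb nAb]]]].
      apply (HA J AJ).
      + intros h. apply nAb, h, Jb.
      + left. split; [exact sJ|split; [auto|exact nJa]]. }
  exists (exist _ A pA). simpl. split; assumption.
Qed.

Lemma spc_sd : support_datum D (OSpc D) (@SuppSpc D).
Proof.
split.
- apply top_coarsest.
- intros [P pP] [Q pQ] Hne.
  assert (Hx : exists a, ~ (P a <-> Q a)).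
  { apply NNPP. intros Hn. apply Hne.
    assert (P = Q) as <-.
    { apply functional_extensionality; intro a; apply propositional_extensionality.
      apply NNPP. intro h. apply Hn. exists a. exact h. }
    f_equal. apply proof_irrelevance. }
  destruct Hx as [a Ha]. exists (fun x => ~ SuppSpc D a x). split.
  + intros O _ Hb. apply Hb.
  + unfold SuppSpc; simpl. intros h. apply Ha. split; intros z; apply NNPP; intros w.
    * apply h in w. apply w. intro k; apply k, z.
    * apply (proj2 h) in w. apply w. intro k; apply k, z.
- intros a [P pP]. unfold SuppSpc; simpl. destruct pP as [[[_ [Hs [Hu _]]] _] _]. split; intros h k; apply h.
  + rewrite <- (shiftK D a). apply Hu, k.
  + apply Hs, k.
- intros s a [P pP]. unfold SuppSpc; simpl. destruct pP as [[_ Hact] _]. intros h k. apply h, Hact, k.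
- intros a b [P pP]. unfold SuppSpc; simpl. destruct pP as [[[_ [_ [_ [Ht Ho]]]] _] _]. split.
  + intros h. apply NNPP. intros k. apply h.
    destruct (Ht _ _ _ (tri_split D a b)) as [_ [_ g]].
    apply g; apply NNPP; intro z; apply k; auto.
  + intros [h|h] k; apply h; apply (Ho a b k).
- intros a b c T [P pP]. unfold SuppSpc; simpl. destruct pP as [[[_ [_ [_ [Ht _]]]] _] _]. intros h.
  apply NNPP. intros k. apply h.
  destruct (Ht _ _ _ T) as [_ [_ g]].
  apply g; apply NNPP; intro z; apply k; auto.
- intros I J sI sJ nIJ Heq.
  assert (Hx : exists a, (I a /\ ~ J a) \/ (J a /\ ~ I a)).
  { apply NNPP. intros Hn. apply nIJ. intros a. split; intros z; apply NNPP; intros w;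
    apply Hn; exists a; auto. }
  destruct Hx as [a [[Ia nJa]|[Ja nIa]]].
  + destruct (separate J a sJ nJa) as [P [JP nPa]].
    destruct (proj1 (Heq P)) as [b [Jb Sb]].
    * exists a. split; [exact Ia|exact nPa].
    * apply Sb, JP, Jb.
  + destruct (separate I a sI nIa) as [P [IP nPa]].
    destruct (proj2 (Heq P)) as [b [Ib Sb]].
    * exists a. split; [exact Ja|exact nPa].
    * apply Sb, IP, Ib.
- intros U. split; auto.
Qed.

Section Univ.
Variables (Y : Type) (OY : (Y -> Prop) -> Prop) (sigma : Ob D -> Y -> Prop).
Hypothesis HY : support_datum D OY sigma.

Lemma sig_unshift c y : sigma (unshift D c) y <-> sigma c y.
Proof.
rewrite (sd1 _ _ _ HY (unshift D c) y). rewrite unshiftK. tauto.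
Qed.

Lemma K_sub y : ~ sigma (zero D) y -> submodule D (fun a => ~ sigma a y).
Proof.
intros h0. split; [split; [exact h0|split; [|split; [|split]]]|].
- intros a h k. apply h. apply (sd1 _ _ _ HY). exact k.
- intros a h k. apply h. apply sig_unshift. exact k.
- intros a b c T. split; [|split].
  + intros ha hb hc. destruct (sd4 _ _ _ HY _ _ _ (tri_rot D _ _ _ T) y hc) as [z|z].
    * apply hb, z.
    * apply ha. apply (sd1 _ _ _ HY). exact z.
  + intros hb hc ha. destruct (sd4 _ _ _ HY _ _ _ (tri_rotinv D _ _ _ T) y ha) as [z|z].
    * apply hc. apply sig_unshift. exact z.
    * apply hb, z.
  + intros ha hc hb. destruct (sd4 _ _ _ HY _ _ _ T y hb) as [z|z]; auto.
- intros a b h. split; intro k; apply h; apply (sd3 _ _ _ HY); auto.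
- intros s a h k. apply h. apply (sd2 _ _ _ HY s). exact k.
Qed.

Lemma y_unique y y' : (forall a, sigma a y <-> sigma a y') -> y = y'.
Proof.
intros H. apply NNPP. intros ne.
destruct (sd_T0 _ _ _ HY y y' ne) as [U [OU nU]].
apply nU. apply (proj1 (sd6 _ _ _ HY U) OU (fun V => V y <-> V y')).
- split; [|split].
  + tauto.
  + intros F HF. split; intros [V [FV Vx]]; exists V; split; auto; apply (HF V FV); auto.
  + intros V W h1 h2. tauto.
- intros a. specialize (H a). tauto.
Qed.

Lemma y_exists (P : Spc D) : exists y, forall a, sigma a y <-> ~ proj1_sig P a.
Proof.
destruct P as [P [sP pP]]. simpl.
set (Q := fun x => forall I, (submodule D I /\ strictly_contains D I P) -> I x).
assert (sQ : submodule D Q) by (apply submodule_inter; intros I [h _]; exact h).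
destruct (pP (fun I => submodule D I /\ strictly_contains D I P) (fun I h => h)) as [PQ [q [Qq nPq]]].
fold Q in PQ, Qq.
assert (Hn := sd5 _ _ _ HY P Q sP sQ).
destruct (classic (exists y, ~ ((exists a, P a /\ sigma a y) <-> (exists b, Q b /\ sigma b y)))) as [[y Hy]|Hc].
2:{ exfalso. apply Hn.
    - intros h. apply nPq. apply (proj2 (h q)). exact Qq.
    - intros y. apply NNPP. intros k. apply Hc. exists y. exact k. }
assert (PhiQ : exists b, Q b /\ sigma b y).
{ apply NNPP. intros k. apply Hy. split; intros z; [|destruct (k z)].
  destruct z as [a [Pa Sa]]. exfalso. apply k. exists a. split; [exact (PQ a Pa)|exact Sa]. }
assert (nPhiP : ~ exists a, P a /\ sigma a y).
{ intros z. apply Hy. destruct z as [a [Pa Sa]].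
  split; intros _; exists a; split; first [assumption | exact (PQ a Pa)]. }
assert (h0 : ~ sigma (zero D) y).
{ intros k. apply nPhiP. exists (zero D). split; [|exact k].
  destruct sP as [[z _] _]. exact z. }
assert (sK := K_sub y h0).
assert (PK : forall x, P x -> ~ sigma x y).
{ intros x Px Sx. apply nPhiP. exists x. auto. }
assert (KP : forall x, ~ sigma x y -> P x).
{ intros x Kx. apply NNPP. intros nPx.
  destruct PhiQ as [b [Qb Sb]].
  apply (Qb (fun a => ~ sigma a y)); [|exact Sb].
  split; [exact sK|]. split; [exact PK|]. exists x. auto. }
exists y. intros a. split.
- intros Sa Pa. apply (PK a Pa Sa).
- intros nPa. apply NNPP. intros k. apply nPa, KP, k.
Qed.

Definition fmap (P : Spc D) : Y :=
  proj1_sig (constructive_indefinite_description _ (y_exists P)).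

Lemma fmap_spec P a : sigma a (fmap P) <-> ~ proj1_sig P a.
Proof.
unfold fmap. destruct (constructive_indefinite_description _ (y_exists P)) as [y h]. apply h.
Qed.

Lemma fmap_map : support_map (OSpc D) (@SuppSpc D) OY sigma fmap.
Proof.
split.
- intros U OU. apply (proj1 (sd6 _ _ _ HY U) OU (fun V => OSpc D (fun x => V (fmap x)))).
  + split; [|split].
    * apply (top_coarsest (@SuppSpc D)).
    * intros F HF.
      destruct (top_coarsest (@SuppSpc D)) as [_ [Hu _]].
      assert (HF' : forall W, (exists V, F V /\ W = (fun x => V (fmap x))) -> OSpc D W).
      { intros W [V [FV ->]]. apply HF. exact FV. }
      apply (coarsest_ext _ _ _ (Hu _ HF')).
      intros x. split.
      -- intros [W [[V [FV ->]] Wx]]. exists V. auto.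
      -- intros [V [FV Vx]]. exists (fun x => V (fmap x)). split; [exists V; auto|exact Vx].
    * intros V W hV hW. destruct (top_coarsest (@SuppSpc D)) as [_ [_ Hi]].
      apply (Hi _ _ hV hW).
  + intros a. apply (coarsest_ext _ (fun x => ~ SuppSpc D a x)).
    * intros O _ Hb. apply Hb.
    * intros x. unfold SuppSpc. rewrite fmap_spec. tauto.
- intros a x. rewrite fmap_spec. unfold SuppSpc. tauto.
Qed.

End Univ.
End S.

Theorem mainTheorem1 (D : Datum) :
  support_datum D (OSpc D) (@SuppSpc D) /\
  forall (Y : Type) (OY : (Y -> Prop) -> Prop) (sigma : Ob D -> Y -> Prop),
    support_datum D OY sigma ->
    exists f : Spc D -> Y,
      support_map (OSpc D) (@SuppSpc D) OY sigma f /\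
      forall g : Spc D -> Y,
        support_map (OSpc D) (@SuppSpc D) OY sigma g -> forall P, g P = f P.
Proof.
split; [apply spc_sd|].
intros Y OY sigma HY. exists (fmap _ _ _ _ HY). split; [apply fmap_map|].
intros g [_ hg] P. apply (y_unique D Y OY sigma HY). intros a.
rewrite (hg a P), fmap_spec. unfold SuppSpc. tauto.
Qed.
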